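(* Let $X$ be a compact metric space and let $f:X\to X$ be a continuous function such that every accumulation point of $X$ is a fixed point of $f$. If $V,W\subseteq X$ are nonempty open sets such that $\overline V\cap\overline W=\emptyset$, then the set $\{x\in X: x\in V \text{ and } f(x)\in W\}$ is finite.
   Context: An accumulation point of $X$ is a non-isolated point of $X$; a point $x$ is fixed if $f(x)=x$. *)

(* Defs.v *)
From HB Require Import structures.
From mathcomp Require Import all_boot all_order all_algebra.
From mathcomp Require Import all_classical all_reals all_analysis.

(* Main.v *)
Require Import Defs.
From HB Require Import structures.
From mathcomp Require Import all_boot all_order all_algebra.
From mathcomp Require Import all_classical all_reals all_analysis.
Import numFieldNormedType.Exports.
Local Open Scope classical_set_scope.

Section Aux.
Context {T : Type} (S : set T).
Definition cofinF : set_system T := fun A => finite_set (S `\` A).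

Lemma cofinF_filter : Filter cofinF.
Proof.
constructor.
- by rewrite /cofinF setDT; exact: finite_set0.
- move=> A B FA FB; rewrite /cofinF setDIr finite_setU; by split.
- move=> A B AB FA; apply: sub_finite_set FA => x [Sx nBx]; split => // Ax.
  by apply: nBx; apply: AB.
Qed.

Lemma cofinF_proper : infinite_set S -> ProperFilter cofinF.
Proof.
move=> iS; constructor; last exact: cofinF_filter.
by rewrite /cofinF setD0.
Qed.
End Aux.

Theorem lemma3p3 (R : realType) (X : pseudoMetricType R)
  (hX : hausdorff_space X) (cX : compact [set: X])
  (f : X -> X) (cf : continuous f)
  (hfix : forall x : X, limit_point [set: X] x -> f x = x)
  (V W : set X) (oV : open V) (oW : open W) (nV : V !=set0) (nW : W !=set0)
  (dVW : closure V `&` closure W = set0) :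
  finite_set [set x : X | V x /\ W (f x)].
Proof.
set S := [set x : X | V x /\ W (f x)].
apply: contrapT => iS.
have PF := @cofinF_proper _ S iS.
have [p [_ clp]] := cX _ PF (@filterT _ _ (@cofinF_filter _ S)).
have key : forall U, nbhs p U -> exists y, [/\ y != p, S y & U y].
  move=> U pU.
  have FA : cofinF S (S `\ p).
    apply: sub_finite_set (finite_set1 p) => x [Sx nx].
    by apply: contrapT => xp; apply: nx; split.
  have [y [[Sy /eqP yp] Uy]] := clp _ _ FA pU.
  by exists y.
have lp : limit_point [set: X] p.
  by move=> U /key [y [? ? ?]]; exists y.
have fp := hfix _ lp.
have cV : closure V p.
  by move=> U /key [y [_ [Vy _] Uy]]; exists y.
have cW : closure W p.
  move=> U pU; rewrite -fp in pU.
  have := cf p U pU => /key [y [_ [_ Wy] Uy]].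
  by exists (f y).
have : (closure V `&` closure W) p by split.
by rewrite dVW.
Qed.
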